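(* For every set $A$, the lattice of all clones on $A$ (ordered by inclusion) is isomorphic to the lattice of all subalgebras of the full block algebra on $A$.
   Context: Finitary operations on $A$ include nullary ones (elements of $A$). A clone on $A$ is a set of finitary operations on $A$ that contains all projections $p^{(n)}_i(a_1,\dots,a_n)=a_i$, is closed under composition (if $f$ is $n$-ary and $g_1,\dots,g_n$ are $k$-ary in the set, $k\ge0$, then $\mathbf a\mapsto f(g_1(\mathbf a),\dots,g_n(\mathbf a))$ on $A^k$ is in the set) and under restriction (if an $n$-ary $f$, $n\ge1$, does not depend on its last argument, then the $(n-1)$-ary $g(a_1,\dots,a_{n-1})=f(a_1,\dots,a_{n-1},b)$ is in the set). Let $\omega=\{1,2,\dots\}$. The top extension of $f:A^n\to A$ is $f^\top:A^\omega\to A$, $f^\top(s)=f(s_1,\dots,s_n)$. The full block algebra on $A$ is the algebra with universe $\{f^\top: f\text{ a finitary operation on }A\}$, nullary operations $\mathsf e_i(s)=s_i$ ($i\ge 1$) and $(n+1)$-ary operations $q_n(\varphi,\psi_1,\dots,\psi_n)(s)=\varphi(s[\psi_1(s),\dots,\psi_n(s)])$ ($n\ge0$), where $s[b_1,\dots,b_n]$ replaces the first $n$ entries of $s$ by $b_1,\dots,b_n$. *)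

(* Defs.v *)
From mathcomp Require Import all_boot.
Set Implicit Arguments. Unset Strict Implicit. Unset Printing Implicit Defensive.

(* A finitary operation on A: an arity n together with f : A^n -> A,
   where A^n is represented as 'I_n -> A.  Arity 0 = nullary operations. *)
Definition op (A : Type) := {n : nat & ('I_n -> A) -> A}.

Definition mkop (A : Type) (n : nat) (f : ('I_n -> A) -> A) : op A :=
  existT (fun m => ('I_m -> A) -> A) n f.

Definition snoc (A : Type) (n : nat) (a : 'I_n -> A) (b : A) : 'I_n.+1 -> A :=
  fun i => match (insub (val i) : option 'I_n) with
           | Some j => a j
           | None => b
           end.

Definition is_clone (A : Type) (C : op A -> Prop) : Prop :=
  (forall (n : nat) (i : 'I_n), C (@mkop A n (fun a => a i))) /\
  (forall (n k : nat) (f : ('I_n -> A) -> A) (g : 'I_n -> ('I_k -> A) -> A),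
      C (mkop f) -> (forall i, C (mkop (g i))) ->
      C (@mkop A k (fun a => f (fun i => g i a)))) /\
  (forall (n : nat) (f : ('I_n.+1 -> A) -> A),
      C (mkop f) ->
      (forall a b b', f (snoc a b) = f (snoc a b')) ->
      forall g : ('I_n -> A) -> A,
        (forall a b, g a = f (snoc a b)) -> C (mkop g)).

(* Infinite sequences s = (s_1, s_2, ...) are modelled as nat -> A,
   with s_{i+1} stored at index i. *)
Definition top (A : Type) (n : nat) (f : ('I_n -> A) -> A) : (nat -> A) -> A :=
  fun s => f (fun i => s (val i)).

Definition block_univ (A : Type) (phi : (nat -> A) -> A) : Prop :=
  exists (n : nat) (f : ('I_n -> A) -> A), phi = top f.

(* nullary operations e_{i+1} *)
Definition blk_e (A : Type) (i : nat) : (nat -> A) -> A := fun s => s i.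

Definition seq_upd (A : Type) (n : nat) (s : nat -> A) (b : 'I_n -> A) : nat -> A :=
  fun k => match (insub k : option 'I_n) with
           | Some j => b j
           | None => s k
           end.

Definition blk_q (A : Type) (n : nat) (phi : (nat -> A) -> A)
    (psi : 'I_n -> (nat -> A) -> A) : (nat -> A) -> A :=
  fun s => phi (seq_upd s (fun i => psi i s)).

Definition is_block_subalgebra (A : Type) (S : ((nat -> A) -> A) -> Prop) : Prop :=
  (forall phi, S phi -> block_univ phi) /\
  (forall i, S (@blk_e A i)) /\
  (forall (n : nat) phi (psi : 'I_n -> (nat -> A) -> A),
      S phi -> (forall i, S (psi i)) -> S (blk_q phi psi)).

Definition subset_of (T : Type) (X Y : T -> Prop) : Prop := forall x, X x -> Y x.

(* Main.v *)
Require Import Defs.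
From mathcomp Require Import all_boot.
From Stdlib Require Import FunctionalExtensionality PropExtensionality IndefiniteDescription.

Set Implicit Arguments. Unset Strict Implicit.

Section S.
Variable A : Type.

Lemma snoc_val k (a : 'I_k -> A) b (x : 'I_k.+1) (j : 'I_k) :
  val x = val j -> snoc a b x = a j.
Proof.
move=> e; rewrite /snoc; case: insubP => [j' _ e'|].
  by congr a; apply: val_inj; rewrite e' e.
by rewrite e ltn_ord.
Qed.

Lemma snoc_restr (s : nat -> A) k :
  snoc (fun i : 'I_k => s (val i)) (s k) = fun i => s (val i).
Proof.
apply: functional_extensionality => x; rewrite /snoc; case: insubP => [j _ e|].
  by rewrite e.
move=> H; have : val x = k.
  by apply/eqP; rewrite eqn_leq -ltnS ltn_ord leqNgt H.
by move=> ->.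
Qed.

Lemma clone_ext (C : op A -> Prop) n (f g : ('I_n -> A) -> A) :
  C (mkop f) -> (forall a, f a = g a) -> C (mkop g).
Proof. by move=> H e; have <- : f = g by apply: functional_extensionality. Qed.

Lemma pad_in (C : op A -> Prop) (HC : is_clone C) m N (H : m <= N) g :
  C (mkop g) -> C (@mkop A N (fun a => g (fun l => a (widen_ord H l)))).
Proof.
move=> Hg; case: HC => [Hp [Hc _]].
by apply: (Hc m N g (fun l a => a (widen_ord H l))) => //.
Qed.

Lemma restr (C : op A -> Prop) (HC : is_clone C) n (f : ('I_n -> A) -> A) d :
  forall m (H : n <= m) g, m = d + n -> C (mkop g) ->
  (forall b, g b = f (fun i => b (widen_ord H i))) -> C (mkop f).
Proof.
elim: d => [|d IH] m H g E Hg Hgb.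
  rewrite add0n in E; subst m.
  apply: (clone_ext Hg) => b; rewrite Hgb; congr f.
  by apply: functional_extensionality => i; congr b; apply: val_inj.
rewrite addSn in E; subst m.
case: HC => [Hp [Hc Hr]].
have key : forall (a : 'I_(d + n) -> A) b,
    g (snoc a b) = f (fun i => a (widen_ord (leq_addl d n) i)).
  move=> a b; rewrite Hgb; congr f; apply: functional_extensionality => i.
  by apply: snoc_val.
apply: (IH (d + n) (leq_addl d n) (fun a => f (fun i => a (widen_ord (leq_addl d n) i)))) => //.
apply: (Hr _ g Hg) => [a b b'|a b]; by rewrite !key.
Qed.

Lemma back (C : op A -> Prop) (HC : is_clone C) n (f : ('I_n -> A) -> A) m (g : ('I_m -> A) -> A) :
  C (mkop g) -> top f = top g -> C (mkop f).
Proof.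
move=> Hg E.
have E' : forall s, f (fun i => s (val i)) = g (fun l => s (val l)).
  by move=> s; move: (f_equal (fun h => h s) E).
case: (leqP m n) => Hmn.
  apply: (clone_ext (pad_in HC Hmn Hg)) => a.
  pose s := fun k => match (insub k : option 'I_n) with Some j => a j | None => f a end.
  have Hs : (fun i : 'I_n => s (val i)) = a.
    by apply: functional_extensionality => i; rewrite /s valK.
  rewrite -{2}Hs E'; congr g; apply: functional_extensionality => l.
  rewrite /s; case: insubP => [j _ e|]; first by congr a; apply: val_inj.
  by rewrite /= (leq_trans (ltn_ord l) Hmn).
have Hnm := ltnW Hmn.
apply: (@restr C HC n f (m - n) m Hnm g (esym (subnK Hnm)) Hg) => b.
pose s := fun k => match (insub k : option 'I_m) with Some j => b j | None => g b end.
have Hs : (fun i : 'I_m => s (val i)) = b.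
  by apply: functional_extensionality => i; rewrite /s valK.
rewrite -{1}Hs -E'; congr f; apply: functional_extensionality => i.
rewrite /s; case: insubP => [j _ e|]; first by congr b; apply: val_inj.
by rewrite /= (leq_trans (ltn_ord i) Hnm).
Qed.

End S.

Definition Fc (A : Type) (C : op A -> Prop) : ((nat -> A) -> A) -> Prop :=
  fun phi => exists n (f : ('I_n -> A) -> A), C (mkop f) /\ phi = top f.

Lemma projT_in (A : Type) (C : op A -> Prop) (x : op A) : C x -> C (mkop (projT2 x)).
Proof. by case: x. Qed.

Lemma part1 (A : Type) (C : op A -> Prop) : is_clone C -> is_block_subalgebra (Fc C).
Proof.
move=> HC; have HC' := HC; case: HC' => [Hp [Hc Hr]].
split; first by move=> phi [n [f [_ ->]]]; exists n, f.
split.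
  move=> i; exists i.+1, (fun a => a (@Ordinal i.+1 i (ltnSn i))); split => //.
move=> n phi psi [n0 [f [Hf ->]]] Hpsi.
have [X HX] : exists X : 'I_n -> op A, forall i, C (X i) /\ psi i = top (projT2 (X i)).
  apply: (functional_choice (fun i (x : op A) => C x /\ psi i = top (projT2 x))) => i; case: (Hpsi i) => m [g [Hg ->]].
  by exists (mkop g).
pose N := maxn n0 (\max_(i < n) projT1 (X i)).
have le0 : n0 <= N by rewrite leq_maxl.
have leM : forall i, projT1 (X i) <= N.
  move=> i; apply: leq_trans (leq_maxr _ _); exact: (leq_bigmax i).
pose G := fun (j : 'I_n0) => match (insub (val j) : option 'I_n) with
  | Some i => fun a : 'I_N -> A => projT2 (X i) (fun l => a (widen_ord (leM i) l))
  | None => fun a : 'I_N -> A => a (widen_ord le0 j) end.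
have HG : forall j, C (mkop (G j)).
  move=> j; rewrite /G; case: (insub (val j)) => [i|].
    by apply: pad_in => //; apply: projT_in; case: (HX i).
  exact: Hp.
exists N, (fun a => f (fun j => G j a)); split; first exact: Hc.
apply: functional_extensionality => s.
rewrite /blk_q /top /seq_upd /=; congr f; apply: functional_extensionality => j.
rewrite /G; case: (insub (val j)) => [i|] //=.
by case: (HX i) => _ ->.
Qed.

Lemma part2 (A : Type) (C1 C2 : op A -> Prop) : is_clone C1 -> is_clone C2 ->
  (subset_of C1 C2 <-> subset_of (Fc C1) (Fc C2)).
Proof.
move=> H1 H2; split.
  by move=> H phi [n [f [Hf ->]]]; exists n, f; split => //; apply: H.
move=> H [n f] Hf.
have [m [g [Hg E]]] : Fc C2 (top f) by apply: H; exists n, f.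
exact: (back H2 Hg E).
Qed.

Lemma part3 (A : Type) (S : ((nat -> A) -> A) -> Prop) : is_block_subalgebra S ->
  exists C, is_clone C /\ Fc C = S.
Proof.
move=> [Hu [He Hq]].
exists (fun o : op A => S (top (projT2 o))); split.
  split; first by move=> n i; exact: (He (val i)).
  split.
    move=> n k f g Hf Hg /=.
    have -> : top (fun a : 'I_k -> A => f (fun i => g i a)) =
              blk_q (top f) (fun i => top (g i)).
      apply: functional_extensionality => s.
      rewrite /blk_q /top /seq_upd; congr f; apply: functional_extensionality => j.
      by rewrite valK.
    by apply: Hq.
  move=> n f Hf Hind g Hg /=.
  have -> : top g = top f => //.
  apply: functional_extensionality => s.
  by rewrite /top (Hg _ (s n)) snoc_restr.
apply: functional_extensionality => phi; apply: propositional_extensionality; split.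
  by move=> [n [f [Hf ->]]].
move=> Hphi; case: (Hu _ Hphi) => n [f E]; exists n, f; split => //.
by rewrite /= -E.
Qed.

Theorem corollary6p17 (A : Type) :
  exists F : (op A -> Prop) -> (((nat -> A) -> A) -> Prop),
    (forall C, is_clone C -> is_block_subalgebra (F C)) /\
    (forall C1 C2, is_clone C1 -> is_clone C2 ->
       (subset_of C1 C2 <-> subset_of (F C1) (F C2))) /\
    (forall S, is_block_subalgebra S -> exists C, is_clone C /\ F C = S).
Proof.
exists (@Fc A); split; first exact: part1.
split; first exact: part2.
exact: part3.
Qed.
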